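(* A set $\mathcal{K}\subseteq\wp(\mathcal{G})$ is coherent if and only if there is a non-empty set $\mathfrak{D}$ whose members are non-empty sets of coherent sets of desirable gambles, such that $\mathfrak{D}$ has the finite intersection property (there are no $\mathbb{D}_1,\ldots,\mathbb{D}_n\in\mathfrak{D}$ with $\mathbb{D}_1\cap\cdots\cap\mathbb{D}_n=\emptyset$), and for all $B\subseteq\mathcal{G}$: $B\in\mathcal{K}$ iff there are finitely many $\mathbb{D}_1,\ldots,\mathbb{D}_n\in\mathfrak{D}$ such that $B\cap D\neq\emptyset$ for every $D\in\mathbb{D}_1\cap\cdots\cap\mathbb{D}_n$.
   Context: $\Omega$ is a non-empty set and $\mathcal{G}$ is the set of bounded functions $\Omega\to\mathbb{R}$. $f\geq g$ means pointwise $\geq$; $f\gneq g$ means $f\geq g$ and $f\neq g$; $\mathcal{G}_{\gneq 0}=\{f: f\gneq 0\}$. $\mathrm{posi}(B)=\{\sum_{i=1}^m\lambda_i h_i: m\geq1,\lambda_i>0,h_i\in B\}$. A set $D\subseteq\mathcal{G}$ is coherent if $0\notin D$; $\mathcal{G}_{\gneq0}\subseteq D$; $\lambda g\in D$ whenever $g\in D,\lambda>0$; and $f+g\in D$ whenever $f,g\in D$. A set $\mathcal{K}\subseteq\wp(\mathcal{G})$ is coherent if: (K$_\emptyset$) $\emptyset\notin\mathcal{K}$; (K$_0$) if $A\in\mathcal{K}$ then $A\setminus\{0\}\in\mathcal{K}$; (K$_{\gneq0}$) if $g\in\mathcal{G}_{\gneq0}$ then $\{g\}\in\mathcal{K}$;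 (K$_\supseteq$) if $A\in\mathcal{K}$ and $B\supseteq A$ then $B\in\mathcal{K}$; (K$_{\mathrm{Dom}}$) if $A\in\mathcal{K}$ and for each $g\in A$, $f_g$ is a gamble with $f_g\geq g$, then $\{f_g: g\in A\}\in\mathcal{K}$; (K$_{\mathrm{Add}}$) if $A_1,\ldots,A_n\in\mathcal{K}$ (finitely many) and for each $\langle g_1,\ldots,g_n\rangle\in A_1\times\cdots\times A_n$, $f_{\langle g_1,\ldots,g_n\rangle}$ is some member of $\mathrm{posi}(\{g_1,\ldots,g_n\})$, then $\{f_{\langle g_1,\ldots,g_n\rangle}:\langle g_1,\ldots,g_n\rangle\in A_1\times\cdots\times A_n\}\in\mathcal{K}$. *)

(* Defs.v *)
(* gambles are real-valued functions on Omega; the set G of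
   gambles is carved out by the predicate [gbounded]. Sets are predicates. *)
From Stdlib Require Import Reals List.
Open Scope R_scope.

Definition gamble (Omega : Type) := Omega -> R.

Definition gbounded {Omega : Type} (f : gamble Omega) : Prop :=
  exists c : R, forall w, Rabs (f w) <= c.

Definition zero_g {Omega : Type} : gamble Omega := fun _ => 0.

Definition gge {Omega : Type} (f g : gamble Omega) : Prop :=
  forall w, g w <= f w.

Definition gpos {Omega : Type} (f : gamble Omega) : Prop :=
  gbounded f /\ gge f zero_g /\ f <> zero_g.

Definition posi {Omega : Type} (B : gamble Omega -> Prop) (f : gamble Omega) : Prop :=
  exists l : list (R * gamble Omega),
    l <> nil /\
    Forall (fun p => 0 < fst p /\ B (snd p)) l /\
    f = (fun w => fold_right (fun p acc => fst p * snd p w + acc) 0 l).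

Definition coherent_D {Omega : Type} (D : gamble Omega -> Prop) : Prop :=
  (forall f, D f -> gbounded f) /\
  ~ D zero_g /\
  (forall g, gpos g -> D g) /\
  (forall g (lam : R), D g -> 0 < lam -> D (fun w => lam * g w)) /\
  (forall f g, D f -> D g -> D (fun w => f w + g w)).

Definition coherent_K {Omega : Type} (K : (gamble Omega -> Prop) -> Prop) : Prop :=
  ~ K (fun _ => False) /\
  (forall A, K A -> K (fun f => A f /\ f <> zero_g)) /\
  (forall g, gpos g -> K (fun f => f = g)) /\
  (forall A B, K A -> (forall f, B f -> gbounded f) -> (forall f, A f -> B f) -> K B) /\
  (forall A (F : gamble Omega -> gamble Omega), K A ->
     (forall g, A g -> gbounded (F g) /\ gge (F g) g) ->
     K (fun h => exists g, A g /\ h = F g)) /\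
  (* K_Add: tuples <g_1,...,g_n> are lists of length n *)
  (forall (n : nat) (A : nat -> gamble Omega -> Prop)
          (F : list (gamble Omega) -> gamble Omega),
     (forall i, (i < n)%nat -> K (A i)) ->
     (forall l, length l = n -> (forall i, (i < n)%nat -> A i (nth i l zero_g)) ->
        posi (fun h => In h l) (F l)) ->
     K (fun h => exists l, length l = n /\
                   (forall i, (i < n)%nat -> A i (nth i l zero_g)) /\ h = F l)).

(* Main.v *)
Require Import Defs.
From Stdlib Require Import Reals List Lra Lia Classical ClassicalEpsilon FunctionalExtensionality.
Open Scope R_scope.

Definition lc {Omega : Type} (l : list (R * gamble Omega)) : gamble Omega :=
  fun w => fold_right (fun p acc => fst p * snd p w + acc) 0 l.

Lemma lc_app {Omega} (l1 l2 : list (R * gamble Omega)) w :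
  lc (l1 ++ l2) w = lc l1 w + lc l2 w.
Proof. induction l1 as [|p l1 IH]; unfold lc in *; simpl; [lra| rewrite IH; ring]. Qed.

Lemma lc_scale {Omega} (lam : R) (l : list (R * gamble Omega)) w :
  lc (map (fun p => (lam * fst p, snd p)) l) w = lam * lc l w.
Proof. induction l as [|p l IH]; unfold lc in *; simpl in *. - rewrite Rmult_0_r; reflexivity. - rewrite IH, Rmult_plus_distr_l, Rmult_assoc; reflexivity. Qed.

Lemma posi_scale {Omega} (P : gamble Omega -> Prop) h lam :
  posi P h -> 0 < lam -> posi P (fun w => lam * h w).
Proof.
  intros [l [Hne [Hf ->]]] Hl.
  exists (map (fun p => (lam * fst p, snd p)) l). split; [|split].
  - destruct l; [congruence| simpl; discriminate].
  - rewrite Forall_forall in *. intros x Hx. apply in_map_iff in Hx.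
    destruct Hx as [y [<- Hy]]. destruct (Hf y Hy). simpl. split; [nra|auto].
  - apply functional_extensionality; intro w. symmetry. apply (lc_scale lam l w).
Qed.

Lemma posi_add {Omega} (P : gamble Omega -> Prop) h1 h2 :
  posi P h1 -> posi P h2 -> posi P (fun w => h1 w + h2 w).
Proof.
  intros [l1 [Hn1 [Hf1 ->]]] [l2 [Hn2 [Hf2 ->]]].
  exists (l1 ++ l2). split; [|split].
  - destruct l1; [congruence| simpl; discriminate].
  - apply Forall_app; auto.
  - apply functional_extensionality; intro w. symmetry. apply (lc_app l1 l2 w).
Qed.

Lemma lc_bounded {Omega} (P : gamble Omega -> Prop) (HP : forall h, P h -> gbounded h) l :
  Forall (fun p => 0 < fst p /\ P (snd p)) l -> gbounded (lc l).
Proof.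
  induction l as [|[a g] l IH]; intro Hf.
  - exists 0. intro w. unfold lc; simpl. rewrite Rabs_R0. lra.
  - pose proof (Forall_inv Hf) as [Ha Hg]. pose proof (Forall_inv_tail Hf) as Hf'.
    simpl in Ha, Hg.
    destruct (IH Hf') as [c2 Hc2]. destruct (HP g Hg) as [c1 Hc1].
    exists (a * c1 + c2). intro w. unfold lc; simpl.
    eapply Rle_trans; [apply Rabs_triang|].
    rewrite Rabs_mult, (Rabs_pos_eq a) by lra.
    specialize (Hc1 w); specialize (Hc2 w). unfold lc in Hc2.
    apply Rplus_le_compat; [apply Rmult_le_compat_l; lra | exact Hc2].
Qed.

Lemma posi_bounded {Omega} (P : gamble Omega -> Prop) f :
  (forall h, P h -> gbounded h) -> posi P f -> gbounded f.
Proof. intros HP [l [_ [Hf ->]]]. exact (lc_bounded P HP l Hf). Qed.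

Lemma lc_D {Omega} (D P : gamble Omega -> Prop) :
  coherent_D D -> (forall h, P h -> D h) ->
  forall l, l <> nil -> Forall (fun p => 0 < fst p /\ P (snd p)) l -> D (lc l).
Proof.
  intros [_ [_ [_ [Hs Ha]]]] HP l. induction l as [|[a g] l IH]; intros Hne Hf; [congruence|].
  pose proof (Forall_inv Hf) as [H1 H2]. pose proof (Forall_inv_tail Hf) as Hf'. simpl in H1, H2.
  assert (Hag : D (fun w => a * g w)) by (apply Hs; auto).
  destruct l as [|q l].
  - replace (lc ((a,g)::nil)) with (fun w => a * g w); [exact Hag|].
    apply functional_extensionality; intro w; unfold lc; simpl; ring.
  - exact (Ha _ _ Hag (IH ltac:(discriminate) Hf')).
Qed.

Lemma posi_D {Omega} (D P : gamble Omega -> Prop) f :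
  coherent_D D -> (forall h, P h -> D h) -> posi P f -> D f.
Proof. intros HD HP [l [Hne [Hf ->]]]. exact (lc_D D P HD HP l Hne Hf). Qed.

Lemma nth_map_seq {X} (f : nat -> X) n i d : (i < n)%nat -> nth i (map f (seq 0 n)) d = f i.
Proof.
  intro Hi. rewrite nth_indep with (d' := f 0%nat) by (rewrite length_map, length_seq; lia).
  rewrite map_nth, seq_nth by lia. reflexivity.
Qed.

Lemma bounded_scale {Omega} (g : gamble Omega) lam : gbounded g -> 0 < lam -> gbounded (fun w => lam * g w).
Proof.
  intros [c Hc] Hl. exists (lam * c). intro w. rewrite Rabs_mult, (Rabs_pos_eq lam) by lra.
  apply Rmult_le_compat_l; [lra| apply Hc].
Qed.

Lemma bounded_add {Omega} (f g : gamble Omega) : gbounded f -> gbounded g -> gbounded (fun w => f w + g w).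
Proof.
  intros [c1 H1] [c2 H2]. exists (c1 + c2). intro w. eapply Rle_trans; [apply Rabs_triang|].
  specialize (H1 w); specialize (H2 w); lra.
Qed.

Lemma bounded_sub {Omega} (f g : gamble Omega) : gbounded f -> gbounded g -> gbounded (fun w => f w - g w).
Proof.
  intros [c1 H1] [c2 H2]. exists (c1 + c2). intro w. unfold Rminus.
  eapply Rle_trans; [apply Rabs_triang|]. rewrite Rabs_Ropp.
  specialize (H1 w); specialize (H2 w); lra.
Qed.

Lemma gpos_scale {Omega} (g : gamble Omega) lam : gpos g -> 0 < lam -> gpos (fun w => lam * g w).
Proof.
  intros [Hb [H0 Hn]] Hl. split; [apply bounded_scale; auto| split].
  - intro w. specialize (H0 w). unfold zero_g in *. nra.
  - intro Heq. apply Hn. apply functional_extensionality. intro w.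
    pose proof (f_equal (fun k => k w) Heq) as E. unfold zero_g in *. simpl in E.
    destruct (Rmult_integral _ _ E); [lra| assumption].
Qed.

Lemma gpos_add {Omega} (f g : gamble Omega) : gpos f -> gpos g -> gpos (fun w => f w + g w).
Proof.
  intros [Hb [H0 Hn]] [Hb' [H0' Hn']]. split; [apply bounded_add; auto| split].
  - intro w. specialize (H0 w); specialize (H0' w). unfold zero_g in *. lra.
  - intro Heq. apply Hn. apply functional_extensionality. intro w.
    pose proof (f_equal (fun k => k w) Heq) as E. unfold zero_g in *. simpl in E.
    specialize (H0 w); specialize (H0' w). lra.
Qed.

Lemma extract {X Y} (R : X -> Y -> Prop) (ls : list X) :
  Forall (fun x => exists y, R x y) ls -> exists ys, Forall2 R ls ys.
Proof.
  induction 1 as [|x l Hx Hl IH]; [exists nil; constructor|].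
  destruct Hx as [y Hy]. destruct IH as [ys Hys]. exists (y::ys). constructor; auto.
Qed.

Lemma F2_l {X Y} (R : X -> Y -> Prop) ls ys : Forall2 R ls ys -> forall x, In x ls -> exists y, In y ys /\ R x y.
Proof.
  induction 1 as [|x y l l' Hxy Hr IH]; simpl; intros z Hz; [contradiction|].
  destruct Hz as [<-|Hz]; [exists y; auto| destruct (IH z Hz) as [w [? ?]]; exists w; auto].
Qed.

Lemma F2_r {X Y} (R : X -> Y -> Prop) ls ys : Forall2 R ls ys -> forall y, In y ys -> exists x, In x ls /\ R x y.
Proof.
  induction 1 as [|x y l l' Hxy Hr IH]; simpl; intros z Hz; [contradiction|].
  destruct Hz as [<-|Hz]; [exists x; auto| destruct (IH z Hz) as [w [? ?]]; exists w; auto].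
Qed.

Lemma key {Omega} (K : (gamble Omega -> Prop) -> Prop)
  (HK : forall A, K A -> forall f, A f -> gbounded f) (CK : coherent_K K)
  (As : list (gamble Omega -> Prop)) (B : gamble Omega -> Prop) :
  Forall K As -> (forall f, B f -> gbounded f) -> ~ K B ->
  exists D, coherent_D D /\ (forall A, In A As -> exists f, A f /\ D f) /\ (forall f, B f -> ~ D f).
Proof.
  intros HAs HB HnB.
  destruct CK as [K0 [K1 [K2 [K3 [K4 K5]]]]].
  pose (n := length As).
  pose (Ai := fun i => nth i As (fun _ : gamble Omega => False)).
  assert (KAi : forall i, (i < n)%nat -> K (Ai i)).
  { intros i Hi. rewrite Forall_forall in HAs. apply HAs. apply nth_In. exact Hi. }
  pose (Good := fun l : list (gamble Omega) => exists h, posi (fun x => In x l) h /\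
        (gge zero_g h \/ exists b, B b /\ gge b h)).
  destruct (classic (exists l, length l = n /\ (forall i, (i < n)%nat -> Ai i (nth i l zero_g)) /\ ~ Good l)) as [[l [Hlen [Hl HnG]]] | Hall].
  - assert (Hlb : forall x, In x l -> gbounded x).
    { intros x Hx. destruct (In_nth l x zero_g Hx) as [i [Hi <-]].
      rewrite Hlen in Hi. exact (HK _ (KAi i Hi) _ (Hl i Hi)). }
    exists (fun f => gbounded f /\ (gpos f \/ exists h, posi (fun x => In x l) h /\ gge f h)).
    split; [|split].
    + split; [|split; [|split; [|split]]].
      * intros f [Hf _]; exact Hf.
      * intros [_ [[_ [_ Hz]] | [h [Hh Hge]]]]; [congruence|].
        apply HnG. exists h. split; auto.
      * intros g Hg. split; [exact (proj1 Hg)| left; exact Hg].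
      * intros g lam [Hgb Hg] Hlam. split; [apply bounded_scale; auto|].
        destruct Hg as [Hg | [h [Hh Hge]]].
        { left. apply gpos_scale; auto. }
        { right. exists (fun w => lam * h w). split; [apply posi_scale; auto|].
          intro w. cbv beta. apply Rmult_le_compat_l; [lra| apply Hge]. }
      * intros f g [Hfb Hf] [Hgb Hg].
        split; [apply bounded_add; auto|].
        destruct Hf as [Hf | [h1 [Hh1 Hge1]]]; destruct Hg as [Hg | [h2 [Hh2 Hge2]]].
        { left. apply gpos_add; auto. }
        { right. exists h2. split; auto. intro w. cbv beta. destruct Hf as [_ [Hf0 _]].
          specialize (Hf0 w); specialize (Hge2 w); unfold zero_g in Hf0; lra. }
        { right. exists h1. split; auto. intro w. cbv beta. destruct Hg as [_ [Hg0 _]].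
          specialize (Hg0 w); specialize (Hge1 w); unfold zero_g in Hg0; lra. }
        { right. exists (fun w => h1 w + h2 w). split; [apply posi_add; auto|].
          intro w; cbv beta; specialize (Hge1 w); specialize (Hge2 w); lra. }
    + intros A HA. destruct (In_nth As A (fun _ => False) HA) as [i [Hi HAi]].
      assert (Hi' : (i < n)%nat) by exact Hi.
      exists (nth i l zero_g).
      pose proof (Hl i Hi') as HAi'. unfold Ai in HAi'. rewrite HAi in HAi'. split; [exact HAi'|].
      split; [exact (HK _ (KAi i Hi') _ (Hl i Hi'))|]. right.
      exists (nth i l zero_g). split; [|intro w; lra].
      exists ((1, nth i l zero_g) :: nil). split; [discriminate|split].
      * constructor; [split; [simpl; lra| simpl; apply nth_In; lia] | constructor].
      * apply functional_extensionality; intro w; simpl; lra.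
    + intros f Hf [Hfb [Hp | Hh]].
      * apply HnB. apply (K3 (fun g => g = f) B); auto. intros g ->; exact Hf.
      * apply HnG. destruct Hh as [h [Hh Hge]]. exists h. split; auto. right; exists f; auto.
  - exfalso. apply HnB.
    assert (HG : forall l, length l = n -> (forall i, (i < n)%nat -> Ai i (nth i l zero_g)) -> Good l).
    { intros l Hlen Hl. apply NNPP. intro Hn. apply Hall. exists l. auto. }
    pose (inh := inhabits (@zero_g Omega)).
    pose (F := fun l : list (gamble Omega) => epsilon inh (fun h => posi (fun x => In x l) h /\ (gge zero_g h \/ exists b, B b /\ gge b h))).
    assert (HF : forall l, length l = n -> (forall i, (i < n)%nat -> Ai i (nth i l zero_g)) ->
       posi (fun x => In x l) (F l) /\ (gge zero_g (F l) \/ exists b, B b /\ gge b (F l))).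
    { intros l H1 H2. unfold F. apply epsilon_spec. exact (HG l H1 H2). }
    pose (A1 := fun h => exists l, length l = n /\ (forall i, (i < n)%nat -> Ai i (nth i l zero_g)) /\ h = F l).
    assert (KA1 : K A1) by exact (K5 n Ai F KAi (fun l H1 H2 => proj1 (HF l H1 H2))).
    pose (G := fun h : gamble Omega => epsilon inh (fun b => (b = zero_g \/ B b) /\ gge b h)).
    assert (HGs : forall h, A1 h -> (G h = zero_g \/ B (G h)) /\ gge (G h) h).
    { intros h [l [H1 [H2 ->]]]. unfold G. apply epsilon_spec.
      destruct (proj2 (HF l H1 H2)) as [Hz | [b [Hb Hge]]].
      - exists zero_g. auto.
      - exists b. auto. }
    assert (HGb : forall h, A1 h -> gbounded (G h) /\ gge (G h) h).
    { intros h Hh. split; [|exact (proj2 (HGs h Hh))].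
      destruct (proj1 (HGs h Hh)) as [E|E]; [rewrite E; exists 0; intro w; unfold zero_g; rewrite Rabs_R0; lra | exact (HB _ E)]. }
    pose proof (K4 A1 G KA1 HGb) as KA2.
    pose proof (K1 _ KA2) as KA3.
    apply (K3 _ B KA3 HB).
    intros f [[g [Hg ->]] Hnz]. destruct (proj1 (HGs g Hg)) as [E|E]; [contradiction|exact E].
Qed.

Theorem mainTheorem12 (Omega : Type) (HOmega : inhabited Omega)
  (K : (gamble Omega -> Prop) -> Prop)
  (HK : forall A, K A -> forall f, A f -> gbounded f) :
  coherent_K K <->
  exists frakD : ((gamble Omega -> Prop) -> Prop) -> Prop,
    (exists DD, frakD DD) /\
    (forall DD, frakD DD -> (exists D, DD D) /\ (forall D, DD D -> coherent_D D)) /\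
    (forall ls : list ((gamble Omega -> Prop) -> Prop),
       ls <> nil -> Forall frakD ls ->
       exists D, forall DD, In DD ls -> DD D) /\
    (forall B : gamble Omega -> Prop, (forall f, B f -> gbounded f) ->
       (K B <->
        exists ls : list ((gamble Omega -> Prop) -> Prop),
          ls <> nil /\ Forall frakD ls /\
          forall D, (forall DD, In DD ls -> DD D) -> exists f, B f /\ D f)).
Proof.
  split.
  - intro CK.
    pose (DDof := fun (A : gamble Omega -> Prop) (D : gamble Omega -> Prop) => coherent_D D /\ exists f, A f /\ D f).
    pose (Rel := fun (DD : (gamble Omega -> Prop) -> Prop) A => K A /\ forall D, DD D <-> DDof A D).
    assert (K0 : ~ K (fun _ => False)) by exact (proj1 CK).
    assert (HAsK : forall ls As, Forall2 Rel ls As -> Forall K As).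
    { intros ls As H. apply Forall_forall. intros A HA. destruct (F2_r Rel ls As H A HA) as [DD [_ [KA _]]]. exact KA. }
    exists (fun DD => exists A, Rel DD A). split; [|split; [|split]].
    + pose (c1 := fun _ : Omega => 1).
      assert (Kc : K (fun f => f = c1)).
      { apply (proj1 (proj2 (proj2 CK))). split; [|split].
        - exists 1. intro w. unfold c1. rewrite Rabs_R1. lra.
        - intro w. unfold c1, zero_g. lra.
        - intro E. destruct HOmega as [w]. pose proof (f_equal (fun k => k w) E) as E'.
          unfold c1, zero_g in E'. simpl in E'. lra. }
      exists (DDof (fun f => f = c1)). exists (fun f => f = c1). split; [exact Kc| intro D; tauto].
    + intros DD [A [KA HA]]. split.
      * destruct (key K HK CK (A :: nil) (fun _ => False) (Forall_cons _ KA (Forall_nil _))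
          (fun f H => False_ind _ H) K0) as [D [Dc [Dm _]]].
        exists D. apply HA. split; [exact Dc| apply Dm; left; reflexivity].
      * intros D HD. apply HA in HD. exact (proj1 HD).
    + intros ls Hne Hf. destruct (extract Rel ls Hf) as [As HAs].
      destruct (key K HK CK As (fun _ => False) (HAsK ls As HAs)
          (fun f H => False_ind _ H) K0) as [D [Dc [Dm _]]].
      exists D. intros DD HDD. destruct (F2_l Rel ls As HAs DD HDD) as [A [HA [KA HR]]].
      apply HR. split; [exact Dc| apply Dm; exact HA].
    + intros B HB. split.
      * intro KB. exists (DDof B :: nil). split; [discriminate| split].
        { constructor; [|constructor]. exists B. split; [exact KB| intro D; tauto]. }
        intros D HD. exact (proj2 (HD (DDof B) (or_introl eq_refl))).
      * intros [ls [Hne [Hf Hall]]]. apply NNPP; intro HnB.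
        destruct (extract Rel ls Hf) as [As HAs].
        destruct (key K HK CK As B (HAsK ls As HAs) HB HnB) as [D [Dc [Dm Db]]].
        destruct (Hall D) as [f [Bf Df]].
        { intros DD HDD. destruct (F2_l Rel ls As HAs DD HDD) as [A [HA [KA HR]]].
          apply HR. split; [exact Dc| apply Dm; exact HA]. }
        exact (Db f Bf Df).
  - intros [frakD [[DD0 HDD0] [Hne [Hfip Hiff]]]].
    assert (Kget : forall A, K A -> exists ls, ls <> nil /\ Forall frakD ls /\
               forall D, (forall DD, In DD ls -> DD D) -> exists f, A f /\ D f).
    { intros A KA. apply (Hiff A (HK A KA)). exact KA. }
    assert (Dcoh : forall ls D, ls <> nil -> Forall frakD ls -> (forall DD, In DD ls -> DD D) -> coherent_D D).
    { intros ls D Hn Hf HD. destruct ls as [|DD ls]; [congruence|].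
      apply (proj2 (Hne DD (Forall_inv Hf))). apply HD. left; auto. }
    split; [|split; [|split; [|split; [|split]]]].
    + intro H. destruct (Kget _ H) as [ls [Hn [Hf Hm]]]. destruct (Hfip ls Hn Hf) as [D HD].
      destruct (Hm D HD) as [f [[] _]].
    + intros A KA. destruct (Kget A KA) as [ls [Hn [Hf Hm]]].
      apply (Hiff _ (fun f Hf' => HK A KA f (proj1 Hf'))).
      exists ls. split; [exact Hn| split; [exact Hf|]].
      intros D HD. destruct (Hm D HD) as [f [Af Df]]. exists f. split; [split; [exact Af|]| exact Df].
      intro E. subst f. destruct (Dcoh ls D Hn Hf HD) as [_ [Hz _]]. exact (Hz Df).
    + intros g Hg. apply (Hiff _ (fun f Hf => eq_ind_r gbounded (proj1 Hg) Hf)).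
      exists (DD0 :: nil). split; [discriminate| split; [constructor; [exact HDD0| constructor]|]].
      intros D HD. exists g. split; [reflexivity|].
      destruct (proj2 (Hne DD0 HDD0) D (HD DD0 (or_introl eq_refl))) as [_ [_ [H3 _]]].
      exact (H3 g Hg).
    + intros A B KA HB HAB. destruct (Kget A KA) as [ls [Hn [Hf Hm]]].
      apply (Hiff _ HB). exists ls. split; [exact Hn| split; [exact Hf|]].
      intros D HD. destruct (Hm D HD) as [f [Af Df]]. exists f. auto.
    + intros A F KA HF. destruct (Kget A KA) as [ls [Hn [Hf Hm]]].
      apply (Hiff _ (fun h Hh => match Hh with ex_intro _ g (conj Ag E) => eq_ind_r gbounded (proj1 (HF g Ag)) E end)).
      exists ls. split; [exact Hn| split; [exact Hf|]].
      intros D HD. destruct (Hm D HD) as [g [Ag Dg]]. exists (F g). split; [exists g; auto|].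
      destruct (Dcoh ls D Hn Hf HD) as [D1 [D2 [D3 [D4 D5]]]].
      destruct (HF g Ag) as [Fb Fge].
      destruct (classic (F g = g)) as [E|E]; [rewrite E; exact Dg|].
      assert (Hp : gpos (fun w => F g w - g w)).
      { split; [apply bounded_sub; [exact Fb| exact (HK A KA g Ag)]| split].
        - intro w. unfold zero_g. specialize (Fge w). lra.
        - intro E'. apply E. apply functional_extensionality. intro w.
          pose proof (f_equal (fun k => k w) E') as E2. unfold zero_g in E2. simpl in E2. lra. }
      replace (F g) with (fun w => g w + (F g w - g w)) by (apply functional_extensionality; intro w; lra).
      exact (D5 _ _ Dg (D3 _ Hp)).
    + intros n A F KA HF.
      destruct n as [|m].
      { exfalso. destruct (HF nil eq_refl (fun i Hi => False_ind _ (Nat.nlt_0_r i Hi))) as [l [Hl [Hf _]]].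
        destruct l as [|p l]; [congruence|]. destruct (Forall_inv Hf) as [_ []]. }
      assert (Hbd : forall h, (exists l, length l = S m /\ (forall i, (i < S m)%nat -> A i (nth i l zero_g)) /\ h = F l) -> gbounded h).
      { intros h [l [Hlen [Hl ->]]]. apply (posi_bounded (fun x => In x l)).
        - intros x Hx. destruct (In_nth l x zero_g Hx) as [i [Hi <-]]. rewrite Hlen in Hi.
          exact (HK _ (KA i Hi) _ (Hl i Hi)).
        - exact (HF l Hlen Hl). }
      apply (Hiff _ Hbd).
      pose (inhL := inhabits (@nil ((gamble Omega -> Prop) -> Prop))).
      pose (P := fun i ls => ls <> nil /\ Forall frakD ls /\ forall D, (forall DD, In DD ls -> DD D) -> exists f, A i f /\ D f).
      pose (lsf := fun i => epsilon inhL (P i)).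
      assert (Hlsf : forall i, (i < S m)%nat -> P i (lsf i)).
      { intros i Hi. apply epsilon_spec. apply Kget. apply KA; auto. }
      pose (ls := concat (map lsf (seq 0 (S m)))).
      assert (Hin : forall i x, (i < S m)%nat -> In x (lsf i) -> In x ls).
      { intros i x Hi Hx. apply in_concat. exists (lsf i). split; auto. apply in_map, in_seq. lia. }
      assert (Hn : ls <> nil).
      { intro Heq. destruct (Hlsf 0%nat ltac:(lia)) as [Hn0 _].
        destruct (lsf 0%nat) as [|x l] eqn:El; [congruence|].
        assert (Hx : In x (lsf 0%nat)) by (rewrite El; left; reflexivity).
        pose proof (Hin 0%nat x ltac:(lia) Hx) as Hx'. rewrite Heq in Hx'. destruct Hx'. }
      assert (Hf : Forall frakD ls).
      { apply Forall_forall. intros DD HDD. apply in_concat in HDD as [l [Hls HDD]].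
        apply in_map_iff in Hls as [i [<- Hi]]. apply in_seq in Hi.
        destruct (Hlsf i ltac:(lia)) as [_ [Hf _]]. rewrite Forall_forall in Hf. auto. }
      exists ls. split; [exact Hn| split; [exact Hf|]].
      intros D HD.
      assert (Hpick : forall i, (i < S m)%nat -> exists f, A i f /\ D f).
      { intros i Hi. destruct (Hlsf i Hi) as [_ [_ Hm]]. apply Hm. intros DD HDD. apply HD.
        exact (Hin i DD Hi HDD). }
      pose (inhG := inhabits (@zero_g Omega)).
      pose (pick := fun i => epsilon inhG (fun f => A i f /\ D f)).
      pose (l := map pick (seq 0 (S m))).
      assert (Hlen : length l = S m) by (unfold l; rewrite length_map, length_seq; reflexivity).
      assert (Hl : forall i, (i < S m)%nat -> A i (nth i l zero_g) /\ D (nth i l zero_g)).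
      { intros i Hi. unfold l. rewrite nth_map_seq by exact Hi. unfold pick. apply epsilon_spec. auto. }
      exists (F l). split.
      * exists l. split; [exact Hlen| split; [intros i Hi; apply Hl; auto| reflexivity]].
      * apply (posi_D D (fun x => In x l)).
        -- exact (Dcoh ls D Hn Hf HD).
        -- intros x Hx. destruct (In_nth l x zero_g Hx) as [i [Hi <-]]. rewrite Hlen in Hi.
           exact (proj2 (Hl i Hi)).
        -- exact (HF l Hlen (fun i Hi => proj1 (Hl i Hi))).
Qed.
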